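(* Let $C\subseteq\mathbb{R}^5$ be a cone. The origin is an isolated point of $C\cap\mathfrak{M}$ if and only if one of the following holds: (i) $C$ is a line (through the origin) intersecting $T$ transversely; (ii) $C\subseteq T^>\cup(T\cap\mathfrak{M}^>)\cup\{0\}$; (iii) $C\subseteq T^<\cup(T\cap\mathfrak{M}^<)\cup\{0\}$.
   Context: A cone is the intersection of finitely many closed halfspaces of $\mathbb{R}^5$ whose bounding hyperplanes pass through the origin. In $\mathbb{R}^5$ with coordinates $(u_1,\dots,u_5)$, let $\mathfrak{M}=\{u_5=u_2u_3-u_1u_4\}$, $\mathfrak{M}^>=\{u_5>u_2u_3-u_1u_4\}$, $\mathfrak{M}^<=\{u_5<u_2u_3-u_1u_4\}$, $T=\{u_5=0\}$, $T^>=\{u_5>0\}$, $T^<=\{u_5<0\}$. *)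

(* Defs.v *)
From Stdlib Require Import Reals List.
Open Scope R_scope.

Record pt := mkpt { u1 : R; u2 : R; u3 : R; u4 : R; u5 : R }.

Definition origin : pt := mkpt 0 0 0 0 0.

Definition dot (a x : pt) : R :=
  u1 a * u1 x + u2 a * u2 x + u3 a * u3 x + u4 a * u4 x + u5 a * u5 x.

Definition scale (t : R) (v : pt) : pt :=
  mkpt (t * u1 v) (t * u2 v) (t * u3 v) (t * u4 v) (t * u5 v).

Definition sqnorm (x : pt) : R := dot x x.

Definition halfspace (a : pt) (x : pt) : Prop := 0 <= dot a x.

Definition is_cone (C : pt -> Prop) : Prop :=
  exists l : list pt, Forall (fun a => a <> origin) l /\
    forall x, C x <-> Forall (fun a => halfspace a x) l.

Definition Mset (x : pt) : Prop := u5 x = u2 x * u3 x - u1 x * u4 x.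
Definition Mgt  (x : pt) : Prop := u5 x > u2 x * u3 x - u1 x * u4 x.
Definition Mlt  (x : pt) : Prop := u5 x < u2 x * u3 x - u1 x * u4 x.
Definition Tset (x : pt) : Prop := u5 x = 0.
Definition Tgt  (x : pt) : Prop := u5 x > 0.
Definition Tlt  (x : pt) : Prop := u5 x < 0.

(* the origin is an isolated point of S (S contains 0 here) *)
Definition isolated_origin (S : pt -> Prop) : Prop :=
  exists eps, 0 < eps /\ forall x, S x -> sqnorm x < eps * eps -> x = origin.

Definition is_line_dir (C : pt -> Prop) (v : pt) : Prop :=
  v <> origin /\ forall x, C x <-> exists t : R, x = scale t v.

(* the line spanned by v meets the hyperplane T transversely iff v is not in T *)
Definition transverse_to_T (v : pt) : Prop := u5 v <> 0.

(* Main.v *)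
Require Import Defs.
From Stdlib Require Import Reals ZArith List Lra Lia Psatz Classical ClassicalEpsilon FunctionalExtensionality.
Open Scope R_scope.

Lemma cv_const c : Un_cv (fun _ => c) c.
Proof. intros e He; exists 0%nat; intros; unfold R_dist.
 replace (c - c) with 0 by ring; rewrite Rabs_R0; lra. Qed.

Lemma cv_nonneg u l : (forall n, 0 <= u n) -> Un_cv u l -> 0 <= l.
Proof. intros H Hc. destruct (Rle_or_lt 0 l) as [|Hl]; auto.
 destruct (Hc (- l)) as [N HN]; [lra|].
 specialize (HN N (le_n N)). unfold R_dist in HN. apply Rabs_def2 in HN.
 specialize (H N). lra. Qed.

Definition incr (f : nat -> nat) := forall n, (f n < f (S n))%nat.

Lemma incr_ge f : incr f -> forall n, (n <= f n)%nat.
Proof. intros H n; induction n; [lia|]. specialize (H n); lia. Qed.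

Lemma incr_lt f : incr f -> forall m n, (m <= n)%nat -> (f m <= f n)%nat.
Proof. intros H m n Hmn; induction Hmn; [lia|]. specialize (H m0); lia. Qed.

Lemma incr_comp f g : incr f -> incr g -> incr (fun n => f (g n)).
Proof. intros Hf Hg n. specialize (Hg n).
 assert (H := incr_lt f Hf (S (g n)) (g (S n)) Hg). specialize (Hf (g n)). lia. Qed.

Lemma cv_sub u l f : incr f -> Un_cv u l -> Un_cv (fun n => u (f n)) l.
Proof. intros Hf Hc e He. destruct (Hc e He) as [N HN]. exists N; intros n Hn.
 apply HN. pose proof (incr_ge f Hf n). lia. Qed.

Lemma BW1 (u : nat -> R) : (forall n, -1 <= u n <= 1) ->
  exists f l, incr f /\ Un_cv (fun n => u (f n)) l.
Proof.
 intros Hb. destruct (Bolzano_Weierstrass u _ (compact_P3 (-1) 1) Hb) as [l Hl].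
 assert (Hn : forall N k : nat, exists p, (N <= p)%nat /\ Rabs (u p - l) < / INR (S k)).
 { intros N k. apply (Hl (fun y => Rabs (y - l) < / INR (S k)) N). assert (Hp : 0 < / INR (S k)).
   { apply Rinv_0_lt_compat; apply lt_0_INR; lia. }
   exists (mkposreal _ Hp). intros y Hy. exact Hy. }
 pose (nx := fun N k => proj1_sig (constructive_indefinite_description _ (Hn N k))).
 assert (Hnx : forall N k, (N <= nx N k)%nat /\ Rabs (u (nx N k) - l) < / INR (S k)).
 { intros N k. unfold nx. destruct (constructive_indefinite_description _ (Hn N k)); auto. }
 pose (f := fix f k := match k with O => nx O O | S k' => nx (S (f k')) (S k') end).
 assert (Hf : forall k, Rabs (u (f k) - l) < / INR (S k)).
 { intros [|k]; simpl; apply Hnx. }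
 exists f, l; split.
 - intros k. simpl. destruct (Hnx (S (f k)) (S k)); lia.
 - intros e He. destruct (archimed (/ e)) as [Ha _].
   assert (Hpos : 0 < / e) by (apply Rinv_0_lt_compat; lra).

   exists (Z.to_nat (up (/ e))). intros n Hnn. unfold R_dist.
   eapply Rlt_le_trans; [apply Hf|].
   assert (HZ : IZR (up (/ e)) <= INR (S n)).
   { rewrite S_INR. assert (0 <= up (/ e))%Z.
     { apply le_IZR. lra. }
     rewrite <- (Z2Nat.id (up (/ e))) by lia. rewrite <- INR_IZR_INZ.
     apply le_INR in Hnn. lra. }
   assert (0 < INR (S n)) by (apply lt_0_INR; lia).
   rewrite <- (Rinv_inv e). apply Rinv_le_contravar; lra.
Qed.

Definition pcv (s : nat -> pt) (l : pt) :=
  Un_cv (fun n => u1 (s n)) (u1 l) /\ Un_cv (fun n => u2 (s n)) (u2 l) /\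
  Un_cv (fun n => u3 (s n)) (u3 l) /\ Un_cv (fun n => u4 (s n)) (u4 l) /\
  Un_cv (fun n => u5 (s n)) (u5 l).

Definition bnd (x : pt) := -1 <= u1 x <= 1 /\ -1 <= u2 x <= 1 /\ -1 <= u3 x <= 1 /\
  -1 <= u4 x <= 1 /\ -1 <= u5 x <= 1.

Lemma BW5 (y : nat -> pt) : (forall n, bnd (y n)) ->
  exists f l, incr f /\ pcv (fun n => y (f n)) l.
Proof.
 intros Hb.
 destruct (BW1 (fun n => u1 (y n))) as [f1 [l1 [I1 C1]]]; [intro n; apply Hb|].
 destruct (BW1 (fun n => u2 (y (f1 n)))) as [f2 [l2 [I2 C2]]]; [intro n; apply Hb|].
 destruct (BW1 (fun n => u3 (y (f1 (f2 n))))) as [f3 [l3 [I3 C3]]]; [intro n; apply Hb|].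
 destruct (BW1 (fun n => u4 (y (f1 (f2 (f3 n)))))) as [f4 [l4 [I4 C4]]]; [intro n; apply Hb|].
 destruct (BW1 (fun n => u5 (y (f1 (f2 (f3 (f4 n))))))) as [f5 [l5 [I5 C5]]]; [intro n; apply Hb|].
 exists (fun n => f1 (f2 (f3 (f4 (f5 n))))), (mkpt l1 l2 l3 l4 l5).
 assert (I45 := incr_comp _ _ I4 I5).
 assert (I345 := incr_comp _ _ I3 I45).
 assert (I2345 := incr_comp _ _ I2 I345).
 split; [apply (incr_comp _ _ I1 I2345)|].
 repeat split; simpl.
 - apply (cv_sub (fun n => u1 (y (f1 n))) l1 _ I2345 C1).
 - apply (cv_sub (fun n => u2 (y (f1 (f2 n)))) l2 _ I345 C2).
 - apply (cv_sub (fun n => u3 (y (f1 (f2 (f3 n))))) l3 _ I45 C3).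
 - apply (cv_sub (fun n => u4 (y (f1 (f2 (f3 (f4 n)))))) l4 _ I5 C4).
 - exact C5.
Qed.

Definition qf (x : pt) : R := u2 x * u3 x - u1 x * u4 x.
Definition F (x : pt) : R := u5 x - qf x.
Definition padd (x y : pt) : pt :=
  mkpt (u1 x + u1 y) (u2 x + u2 y) (u3 x + u3 y) (u4 x + u4 y) (u5 x + u5 y).
Definition sig (x : pt) : pt := mkpt (- u1 x) (- u2 x) (u3 x) (u4 x) (- u5 x).

Lemma pt_eq x y : u1 x = u1 y -> u2 x = u2 y -> u3 x = u3 y -> u4 x = u4 y ->
  u5 x = u5 y -> x = y.
Proof. destruct x, y; simpl; intros; subst; reflexivity. Qed.

Lemma F_scale d x : F (scale d x) = d * (u5 x - d * qf x).
Proof. unfold F, qf, scale; simpl; ring. Qed.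

Lemma sqnorm_scale d x : sqnorm (scale d x) = d * d * sqnorm x.
Proof. unfold sqnorm, dot, scale; simpl; ring. Qed.

Lemma sqnorm_nonneg x : 0 <= sqnorm x.
Proof. unfold sqnorm, dot.
 pose proof (Rle_0_sqr (u1 x)); pose proof (Rle_0_sqr (u2 x)); pose proof (Rle_0_sqr (u3 x));
 pose proof (Rle_0_sqr (u4 x)); pose proof (Rle_0_sqr (u5 x)); unfold Rsqr in *; lra. Qed.

Lemma sqnorm_zero x : sqnorm x = 0 -> x = origin.
Proof. unfold sqnorm, dot; intros H.
 pose proof (Rle_0_sqr (u1 x)); pose proof (Rle_0_sqr (u2 x)); pose proof (Rle_0_sqr (u3 x));
 pose proof (Rle_0_sqr (u4 x)); pose proof (Rle_0_sqr (u5 x)); unfold Rsqr in *.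
 apply pt_eq; simpl; nra. Qed.

Lemma sqnorm_origin : sqnorm origin = 0.
Proof. unfold sqnorm, dot, origin; simpl; ring. Qed.

Lemma sig_sig x : sig (sig x) = x.
Proof. apply pt_eq; unfold sig; simpl; ring. Qed.
Lemma sig_origin : sig origin = origin.
Proof. apply pt_eq; unfold sig, origin; simpl; ring. Qed.
Lemma sig_scale t x : sig (scale t x) = scale t (sig x).
Proof. apply pt_eq; unfold sig, scale; simpl; ring. Qed.
Lemma sig_padd x y : sig (padd x y) = padd (sig x) (sig y).
Proof. apply pt_eq; unfold sig, padd; simpl; ring. Qed.
Lemma sqnorm_sig x : sqnorm (sig x) = sqnorm x.
Proof. unfold sqnorm, dot, sig; simpl; ring. Qed.
Lemma F_sig x : F (sig x) = - F x.
Proof. unfold F, qf, sig; simpl; ring. Qed.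

Definition Cprops (C : pt -> Prop) :=
  C origin /\ (forall t x, 0 <= t -> C x -> C (scale t x)) /\
  (forall x y, C x -> C y -> C (padd x y)) /\
  (forall s l, (forall n, C (s n)) -> pcv s l -> C l).

Lemma cone_props C : is_cone C -> Cprops C.
Proof.
 intros [l [_ Hl]].
 assert (Hc : forall x, C x <-> forall a, In a l -> 0 <= dot a x).
 { intros x. rewrite Hl, Forall_forall. unfold halfspace. tauto. }
 repeat split.
 - apply Hc. intros a _. unfold dot, origin; simpl; lra.
 - intros t x Ht Hx. apply Hc. intros a Ha. apply Hc with (a := a) in Hx; auto.
   replace (dot a (scale t x)) with (t * dot a x) by (unfold dot, scale; simpl; ring).
   nra.
 - intros x y Hx Hy. apply Hc. intros a Ha. apply Hc with (a := a) in Hx; auto.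
   apply Hc with (a := a) in Hy; auto.
   replace (dot a (padd x y)) with (dot a x + dot a y) by (unfold dot, padd; simpl; ring).
   lra.
 - intros s x Hs [c1 [c2 [c3 [c4 c5]]]]. apply Hc. intros a Ha.
   apply (cv_nonneg (fun n => dot a (s n))).
   + intros n. apply Hc; auto.
   + unfold dot.
     repeat apply CV_plus; apply CV_mult; auto; apply cv_const.
Qed.

Lemma sig_props C : Cprops C -> Cprops (fun x => C (sig x)).
Proof.
 intros [H0 [Hs [Ha Hl]]]. repeat split.
 - rewrite sig_origin; auto.
 - intros t x Ht Hx. rewrite sig_scale; auto.
 - intros x y Hx Hy. rewrite sig_padd; auto.
 - intros s l Hsn [c1 [c2 [c3 [c4 c5]]]]. apply (Hl (fun n => sig (s n))); auto.
   repeat split; unfold sig; simpl; auto; apply CV_opp; auto.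
Qed.

Lemma INRS_pos n : 0 < INR (S n).
Proof. apply lt_0_INR; lia. Qed.

Lemma cv_inv : Un_cv (fun n => / INR (S n)) 0.
Proof.
 intros e He. destruct (archimed (/ e)) as [Ha _].
 assert (Hpos : 0 < / e) by (apply Rinv_0_lt_compat; lra).
 exists (Z.to_nat (up (/ e))). intros n Hnn. unfold R_dist.
 rewrite Rminus_0_r, Rabs_right by (left; apply Rinv_0_lt_compat, INRS_pos).
 assert (HZ : IZR (up (/ e)) <= INR (S n)).
 { rewrite S_INR. assert (0 <= up (/ e))%Z by (apply le_IZR; lra).
   rewrite <- (Z2Nat.id (up (/ e))) by lia. rewrite <- INR_IZR_INZ.
   apply le_INR in Hnn. lra. }
 pose proof (INRS_pos n).
 rewrite <- (Rinv_inv e). apply Rinv_lt_contravar; [apply Rmult_lt_0_compat|]; lra.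
Qed.

Lemma squeeze (w v : nat -> R) : (forall n, 0 <= w n <= 2 * v n) -> Un_cv v 0 -> Un_cv w 0.
Proof.
 intros H Hv e He. destruct (Hv (e/2)) as [N HN]; [lra|]. exists N; intros n Hn.
 specialize (HN n Hn). specialize (H n). unfold R_dist in *.
 rewrite Rminus_0_r in *. apply Rabs_def2 in HN. rewrite Rabs_right by lra. lra.
Qed.

Lemma iso_ii C (P : Cprops C)
  (H2 : forall x, C x -> Tgt x \/ (Tset x /\ Mgt x) \/ x = origin) :
  isolated_origin (fun x => C x /\ Mset x).
Proof.
 destruct P as [P0 [Ps [Pa Pl]]].
 apply NNPP; intro Hn.
 assert (Hx : forall n : nat, exists x, C x /\ Mset x /\
           sqnorm x < / INR (S n) * / INR (S n) /\ x <> origin).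
 { intro n. apply NNPP; intro Hm. apply Hn. exists (/ INR (S n)).
   split; [apply Rinv_0_lt_compat, INRS_pos|]. intros x [Cx Mx] Hs.
   apply NNPP; intro Hne. apply Hm; exists x; auto. }
 pose (xs := fun n => proj1_sig (constructive_indefinite_description _ (Hx n))).
 assert (Hxs : forall n, C (xs n) /\ Mset (xs n) /\
           sqnorm (xs n) < / INR (S n) * / INR (S n) /\ xs n <> origin).
 { intro n; unfold xs; destruct (constructive_indefinite_description _ (Hx n)); auto. }
 pose (r := fun n => sqrt (sqnorm (xs n))).
 assert (Hr : forall n, 0 < r n /\ r n * r n = sqnorm (xs n)).
 { intro n. destruct (Hxs n) as [_ [_ [_ Hne]]].
   assert (0 < sqnorm (xs n)).
   { destruct (sqnorm_nonneg (xs n)) as [|E]; auto. exfalso; apply Hne, sqnorm_zero; auto. }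
   split; [apply sqrt_lt_R0; auto| apply sqrt_sqrt; lra]. }
 pose (y := fun n => scale (/ r n) (xs n)).
 assert (Hy : forall n, C (y n) /\ sqnorm (y n) = 1 /\ bnd (y n) /\ 0 <= qf (y n) /\
                 0 <= u5 (y n) <= 2 * / INR (S n)).
 { intro n. destruct (Hxs n) as [Cx [Mx [Sx Nx]]]. destruct (Hr n) as [r0 r2].
   assert (ri : 0 < / r n) by (apply Rinv_0_lt_compat; auto).
   assert (Cy : C (y n)) by (apply Ps; auto; lra).
   assert (Sy : sqnorm (y n) = 1).
   { unfold y. rewrite sqnorm_scale, <- r2. field. lra. }
   assert (By : bnd (y n)).
   { revert Sy. unfold sqnorm, dot, bnd. intros Sy.
     pose proof (Rle_0_sqr (u1 (y n))); pose proof (Rle_0_sqr (u2 (y n)));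
     pose proof (Rle_0_sqr (u3 (y n))); pose proof (Rle_0_sqr (u4 (y n)));
     pose proof (Rle_0_sqr (u5 (y n))); unfold Rsqr in *.
     repeat split; nra. }
   assert (Eu : u5 (y n) = r n * qf (y n)).
   { unfold y, qf, scale; simpl. unfold Mset in Mx. rewrite Mx. field. lra. }
   assert (Q : 0 < qf (xs n)).
   { destruct (H2 _ Cx) as [T|[[T M]|O]]; unfold Tgt, Tset, Mgt, Mset, qf in *.
     - lra.
     - lra.
     - contradiction. }
   assert (Qy : qf (y n) = / r n * / r n * qf (xs n)).
   { unfold y, qf, scale; simpl; ring. }
   assert (Q2 : qf (y n) <= 2).
   { unfold qf, bnd in *. destruct By as [[a1 b1] [[a2 b2] [[a3 b3] [[a4 b4] _]]]]. nra. }
   assert (Hrn : r n < / INR (S n)).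
   { pose proof (Rinv_0_lt_compat _ (INRS_pos n)). nra. }
   assert (Qp : 0 < qf (y n)) by (rewrite Qy; repeat apply Rmult_lt_0_compat; auto).
   split; [auto|split; [auto|split; [auto|split]]]; [lra|].
   rewrite Eu. split; nra. }
 destruct (BW5 y) as [f [l [If Cl]]]; [intro n; apply Hy|].
 assert (Cll : C l) by (apply (Pl (fun n => y (f n))); auto; intro; apply Hy).
 destruct Cl as [c1 [c2 [c3 [c4 c5]]]].
 assert (U5 : u5 l = 0).
 { apply (UL_sequence (fun n => u5 (y (f n)))); auto.
   apply (squeeze _ (fun n => / INR (S (f n)))).
   - intro n; apply Hy.
   - apply (cv_sub (fun n => / INR (S n))); auto; apply cv_inv. }
 assert (Q : 0 <= qf l).
 { apply (cv_nonneg (fun n => qf (y (f n)))).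
   - intro; apply Hy.
   - unfold qf. apply CV_minus; apply CV_mult; auto. }
 assert (S1 : sqnorm l = 1).
 { apply (UL_sequence (fun n => sqnorm (y (f n)))).
   - unfold sqnorm, dot. repeat apply CV_plus; apply CV_mult; auto.
   - replace (fun n => sqnorm (y (f n))) with (fun _ : nat => 1).
     + apply cv_const.
     + apply functional_extensionality; intro n; symmetry; apply Hy. }
 destruct (H2 l Cll) as [T|[[T M]|O]]; unfold Tgt, Mgt, qf in *.
 - lra.
 - lra.
 - subst l. rewrite sqnorm_origin in S1. lra.
Qed.

Definition comb (x z : pt) (t : R) : pt :=
  mkpt ((1-t)*u1 x + t*u1 z) ((1-t)*u2 x + t*u2 z) ((1-t)*u3 x + t*u3 z)
       ((1-t)*u4 x + t*u4 z) ((1-t)*u5 x + t*u5 z).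

Lemma sq_conv t a b : 0 <= t <= 1 -> ((1-t)*a + t*b) * ((1-t)*a + t*b) <= a*a + b*b.
Proof. intros H. assert (((1-t)*a+t*b)*((1-t)*a+t*b) <= (1-t)*(a*a) + t*(b*b)).
 { assert (0 <= t*(1-t)*((a-b)*(a-b))).
   { apply Rmult_le_pos; [nra| apply Rle_0_sqr]. } nra. }
 assert (0 <= a*a) by apply Rle_0_sqr. assert (0 <= b*b) by apply Rle_0_sqr. nra. Qed.

Lemma cont_poly a1 a2 a3 a4 a5 b1 b2 b3 b4 b5 d : continuity (fun t =>
  d * ((1-t)*a5 + t*b5) - (d * ((1-t)*a2 + t*b2) * (d * ((1-t)*a3 + t*b3)) -
    d * ((1-t)*a1 + t*b1) * (d * ((1-t)*a4 + t*b4)))).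
Proof. reg. Qed.

Lemma cross0 : True. Proof. exact I. Qed.
Lemma cross C (P : Cprops C) (iso : isolated_origin (fun x => C x /\ Mset x)) x z :
  C x -> C z -> x <> origin -> (forall c, z <> scale c x) ->
  (exists d0, 0 < d0 /\ forall d, 0 < d -> d <= d0 -> F (scale d x) * F (scale d z) < 0) ->
  False.
Proof.
 destruct P as [P0 [Ps [Pa Pl]]].
 intros Cx Cz Nx Nz [d0 [Hd0 Hd]]. destruct iso as [eps [He Hiso]].
 pose (S := sqnorm x + sqnorm z).
 assert (HS : 0 <= S) by (unfold S; pose proof (sqnorm_nonneg x); pose proof (sqnorm_nonneg z); lra).
 pose (d := Rmin d0 (eps / (S+1))).
 assert (Hdp : 0 < d) by (unfold d; apply Rmin_pos; [lra| apply Rdiv_lt_0_compat; lra]).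
 assert (Hdd0 : d <= d0) by apply Rmin_l.
 assert (Hde : d <= eps / (S+1)) by apply Rmin_r.
 assert (HdS : d * d * S < eps * eps).
 { assert (d * (S+1) <= eps).
   { apply (Rmult_le_compat_r (S+1)) in Hde; [|lra].
     replace (eps / (S+1) * (S+1)) with eps in Hde by (field; lra). lra. }
   assert (A1 : d * d * S < (d * (S+1)) * (d * (S+1))).
   { assert (0 < d * d) by (apply Rmult_lt_0_compat; lra).
     replace ((d * (S+1)) * (d * (S+1))) with (d*d*((S+1)*(S+1))) by ring.
     apply Rmult_lt_compat_l; nra. }
   assert (A2 : (d * (S+1)) * (d * (S+1)) <= eps * eps).
   { apply Rmult_le_compat; nra. }
   lra. }
 pose (g := fun t => F (scale d (comb x z t))).
 assert (Hg : continuity g).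
 { exact (cont_poly (u1 x) (u2 x) (u3 x) (u4 x) (u5 x) (u1 z) (u2 z) (u3 z) (u4 z) (u5 z) d). }
 assert (g0 : g 0 = F (scale d x)).
 { unfold g; f_equal; f_equal; apply pt_eq; unfold comb; simpl; ring. }
 assert (g1 : g 1 = F (scale d z)).
 { unfold g; f_equal; f_equal; apply pt_eq; unfold comb; simpl; ring. }
 specialize (Hd d Hdp Hdd0). rewrite <- g0, <- g1 in Hd.
 assert (Ht : exists t, 0 <= t <= 1 /\ g t = 0).
 { destruct (Rlt_or_le (g 0) 0) as [H0|H0].
   - assert (0 < g 1) by nra.
     destruct (IVT g 0 1 Hg Rlt_0_1 H0 H) as [t [Ht Hgt]]. exists t; auto.
   - assert (g 1 < 0) by nra. assert (0 < g 0) by nra.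
     destruct (IVT (fun t => - g t) 0 1 (continuity_opp _ Hg) Rlt_0_1) as [t [Ht Hgt]];
       [lra|lra|]. exists t; split; auto; lra. }
 destruct Ht as [t [Ht Hgt]].
 pose (w := scale d (comb x z t)).
 assert (Cw : C w).
 { replace w with (padd (scale (d*(1-t)) x) (scale (d*t) z)).
   - apply Pa; apply Ps; auto; nra.
   - apply pt_eq; unfold w, padd, scale, comb; simpl; ring. }
 assert (Mw : Mset w).
 { unfold g in Hgt. fold w in Hgt. unfold F, qf, Mset in *. lra. }
 assert (Sw : sqnorm w < eps * eps).
 { unfold w. rewrite sqnorm_scale.
   assert (sqnorm (comb x z t) <= S).
   { unfold S, sqnorm, dot, comb; simpl.
     pose proof (sq_conv t (u1 x) (u1 z) Ht); pose proof (sq_conv t (u2 x) (u2 z) Ht);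
     pose proof (sq_conv t (u3 x) (u3 z) Ht); pose proof (sq_conv t (u4 x) (u4 z) Ht);
     pose proof (sq_conv t (u5 x) (u5 z) Ht). lra. }
   assert (0 <= d*d) by nra. nra. }
 assert (W0 := Hiso w (conj Cw Mw) Sw).
 assert (E : forall a b, d * ((1-t)*a + t*b) = 0 -> (1-t)*a + t*b = 0).
 { intros a b Hab. apply Rmult_integral in Hab. destruct Hab; auto; lra. }
 unfold w, scale, comb, origin in W0. injection W0; intros e5 e4 e3 e2 e1.
 apply E in e1; apply E in e2; apply E in e3; apply E in e4; apply E in e5.
 destruct (Req_dec t 0) as [T0|T0].
 - subst t. apply Nx. apply pt_eq; simpl; lra.
 - assert (K : forall a b, (1-t)*a + t*b = 0 -> b = - (1-t) / t * a).
   { intros a b Hab. apply (Rmult_eq_reg_l t); auto.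
     replace (t * (- (1-t) / t * a)) with (- ((1-t) * a)) by (field; auto). lra. }
   apply (Nz (- (1-t) / t)). apply pt_eq; unfold scale; simpl; apply K; auto.
Qed.

Lemma small a b : a <> 0 -> exists d0, 0 < d0 /\ forall d, 0 < d -> d <= d0 -> 0 < a * (a - d * b).
Proof.
 intros Ha. exists (Rabs a / (Rabs b + 1)).
 assert (A : 0 < Rabs a) by (apply Rabs_pos_lt; auto).
 assert (B : 0 <= Rabs b) by apply Rabs_pos.
 split; [apply Rdiv_lt_0_compat; lra|]. intros d Hd Hd0.
 assert (D : d * (Rabs b + 1) <= Rabs a).
 { apply (Rmult_le_compat_r (Rabs b + 1)) in Hd0; [|lra].
   replace (Rabs a / (Rabs b + 1) * (Rabs b + 1)) with (Rabs a) in Hd0 by (field; lra). lra. }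
 assert (AA : Rabs a * Rabs a = a * a).
 { rewrite <- Rabs_mult, Rabs_right; [reflexivity| apply Rle_ge; nra]. }
 assert (AB : a * b <= Rabs a * Rabs b) by (rewrite <- Rabs_mult; apply Rle_abs).
 assert (E : d * (a * b) <= d * (Rabs a * Rabs b)) by (apply Rmult_le_compat_l; lra).
 assert (E2 : d * (Rabs a * Rabs b) < Rabs a * Rabs a).
 { replace (d * (Rabs a * Rabs b)) with (Rabs a * (d * Rabs b)) by ring.
   apply Rmult_lt_compat_l; auto. lra. }
 replace (a * (a - d * b)) with (a * a - d * (a * b)) by ring. lra.
Qed.

Definition smallneg x := exists d0, 0 < d0 /\ forall d, 0 < d -> d <= d0 -> F (scale d x) < 0.
Definition smallpos x := exists d0, 0 < d0 /\ forall d, 0 < d -> d <= d0 -> 0 < F (scale d x).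

Lemma L_neg x : u5 x < 0 -> smallneg x.
Proof. intros H. destruct (small (u5 x) (qf x)) as [d0 [Hd0 Hd]]; [lra|].
 exists d0; split; auto; intros d H1 H2. specialize (Hd d H1 H2). rewrite F_scale.
 assert (u5 x - d * qf x < 0) by nra. nra. Qed.
Lemma L_pos x : 0 < u5 x -> smallpos x.
Proof. intros H. destruct (small (u5 x) (qf x)) as [d0 [Hd0 Hd]]; [lra|].
 exists d0; split; auto; intros d H1 H2. specialize (Hd d H1 H2). rewrite F_scale.
 assert (0 < u5 x - d * qf x) by nra. nra. Qed.
Lemma L_zneg x : u5 x = 0 -> 0 < qf x -> smallneg x.
Proof. intros H Q. exists 1; split; [lra|]; intros d H1 H2. rewrite F_scale, H.
 assert (0 < d * qf x) by nra. nra. Qed.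
Lemma L_zpos x : u5 x = 0 -> qf x < 0 -> smallpos x.
Proof. intros H Q. exists 1; split; [lra|]; intros d H1 H2. rewrite F_scale, H.
 assert (d * qf x < 0) by nra. nra. Qed.

Lemma mk x z : smallneg x -> smallpos z ->
  exists d0, 0 < d0 /\ forall d, 0 < d -> d <= d0 ->
    F (scale d x) * F (scale d z) < 0 /\ F (scale d z) * F (scale d x) < 0.
Proof.
 intros [a [Ha HA]] [b [Hb HB]]. exists (Rmin a b). split; [apply Rmin_pos; auto|].
 intros d H1 H2. pose proof (Rmin_l a b); pose proof (Rmin_r a b).
 specialize (HA d H1 ltac:(lra)). specialize (HB d H1 ltac:(lra)). split; nra.
Qed.

Ltac use_cross C P iso x z H1 H2 :=
  apply (cross C P iso x z); auto;
  let M := fresh in destruct (mk _ _ H1 H2) as [d0 [? M]]; exists d0; split; auto;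
  intros; apply M; auto.

Lemma ray_iso C (P : Cprops C) (iso : isolated_origin (fun x => C x /\ Mset x)) x :
  C x -> x <> origin -> u5 x = 0 -> qf x = 0 -> False.
Proof.
 intros Cx Nx U Q. destruct P as [P0 [Ps _]]. destruct iso as [eps [He Hi]].
 pose (S := sqnorm x). assert (HS : 0 <= S) by apply sqnorm_nonneg.
 pose (d := eps / (S+1)).
 assert (Hd : 0 < d) by (apply Rdiv_lt_0_compat; lra).
 assert (D : d * (S+1) = eps) by (unfold d; field; lra).
 assert (HdS : d * d * S < eps * eps).
 { rewrite <- D. assert (0 < d*d) by nra.
   replace ((d * (S+1)) * (d * (S+1))) with (d*d*((S+1)*(S+1))) by ring.
   apply Rmult_lt_compat_l; nra. }
 assert (W : scale d x = origin).
 { apply Hi. split; [apply Ps; auto; lra|].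
   unfold Mset. assert (F (scale d x) = 0) by (rewrite F_scale, U, Q; ring).
   unfold F, qf in *; lra.
   rewrite sqnorm_scale. exact HdS. }
 apply Nx. unfold scale, origin in W. injection W; intros.
 apply pt_eq; simpl;
 match goal with |- ?a = 0 => assert (d * a = 0) by auto end; nra.
Qed.

Lemma nz_of_u5 x : u5 x <> 0 -> x <> origin.
Proof. intros H E; subst; apply H; reflexivity. Qed.

Lemma caseA C (P : Cprops C) (iso : isolated_origin (fun x => C x /\ Mset x)) x z :
  C x -> C z -> u5 x < 0 -> 0 < u5 z -> exists v, is_line_dir C v /\ transverse_to_T v.
Proof.
 intros Cx Cz Ux Uz.
 assert (Nx : x <> origin) by (apply nz_of_u5; lra).
 destruct (classic (forall c, z <> scale c x)) as [Hnc|Hc].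
 { exfalso. use_cross C P iso x z (L_neg x Ux) (L_pos z Uz). }
 apply not_all_not_ex in Hc. destruct Hc as [c Ec].
 assert (Hcn : c < 0).
 { assert (u5 z = c * u5 x) by (rewrite Ec; reflexivity). nra. }
 destruct P as [P0 [Ps [Pa Pl]]].
 destruct (classic (forall w, C w -> exists t, w = scale t x)) as [Hl|Hl].
 - exists x. split; [split; auto|unfold transverse_to_T; lra].
   intros w; split; auto. intros [t ->].
   destruct (Rle_or_lt 0 t) as [Ht|Ht]; [apply Ps; auto|].
   replace (scale t x) with (scale (t / c) z).
   + apply Ps; auto. left. apply Rdiv_neg_neg; auto.
   + rewrite Ec. apply pt_eq; unfold scale; simpl; field; lra.
 - exfalso. apply not_all_ex_not in Hl. destruct Hl as [w Hw].
   apply imply_to_and in Hw. destruct Hw as [Cw Hw].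
   pose (k := (Rabs (u5 w) + 1) / u5 z).
   assert (Hk : 0 < k) by (apply Rdiv_lt_0_compat; [pose proof (Rabs_pos (u5 w)); lra|auto]).
   pose (z' := padd w (scale k z)).
   assert (Cz' : C z') by (apply Pa; auto; apply Ps; auto; lra).
   assert (Uz' : 0 < u5 z').
   { unfold z', padd, scale; simpl. unfold k.
     replace ((Rabs (u5 w) + 1) / u5 z * u5 z) with (Rabs (u5 w) + 1) by (field; lra).
     pose proof (Rle_abs (- u5 w)). rewrite Rabs_Ropp in H. lra. }
   assert (Nz' : forall c', z' <> scale c' x).
   { intros c' E. apply Hw. exists (c' - k * c).
     apply pt_eq; unfold z', padd, scale in E |- *; injection E; intros; rewrite Ec in *;
     simpl in *; lra. }
   use_cross C (conj P0 (conj Ps (conj Pa Pl))) iso x z' (L_neg x Ux) (L_pos z' Uz').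
Qed.

Lemma caseB C (P : Cprops C) (iso : isolated_origin (fun x => C x /\ Mset x)) :
  (forall x, C x -> 0 <= u5 x) ->
  (forall x, C x -> Tgt x \/ (Tset x /\ Mgt x) \/ x = origin) \/
  (forall x, C x -> Tlt x \/ (Tset x /\ Mlt x) \/ x = origin).
Proof.
 intros Hnn.
 assert (Hq : forall x, C x -> x <> origin -> u5 x = 0 -> qf x <> 0).
 { intros x Cx Nx U Q. apply (ray_iso C P iso x); auto. }
 destruct (classic (exists z, C z /\ 0 < u5 z)) as [[z [Cz Uz]]|Hno].
 - left. intros x Cx.
   destruct (classic (x = origin)) as [|Nx]; [auto|].
   destruct (Hnn x Cx) as [U|U]; [left; unfold Tgt; lra|].
   right; left. split; [unfold Tset; auto|]. unfold Mgt.
   destruct (Rlt_or_le (qf x) 0) as [Q|Q]; [unfold qf in Q; lra|].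
   destruct Q as [Q|Q]; [|exfalso; apply (Hq x Cx Nx); auto].
   exfalso.
   assert (Nzx : forall c, z <> scale c x).
   { intros c E. rewrite E in Uz. unfold scale in Uz; simpl in Uz. rewrite <- U in Uz. lra. }
   use_cross C P iso x z (L_zneg x (eq_sym U) Q) (L_pos z Uz).
 - assert (U0 : forall x, C x -> u5 x = 0).
   { intros x Cx. destruct (Hnn x Cx); auto. exfalso; apply Hno; exists x; auto. }
   destruct (classic (exists x, C x /\ x <> origin /\ 0 < qf x)) as [[x [Cx [Nx Qx]]]|Hno2].
   + right. intros y Cy. destruct (classic (y = origin)) as [|Ny]; [auto|].
     right; left. split; [apply U0; auto|]. unfold Mlt. rewrite (U0 y Cy).
     destruct (Rlt_or_le 0 (qf y)) as [Q|Q]; [unfold qf in Q; lra|].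
     destruct Q as [Q|Q]; [|exfalso; apply (Hq y Cy Ny); auto; apply U0; auto].
     exfalso.
     assert (Nyx : forall c, y <> scale c x).
     { intros c E. rewrite E in Q. unfold qf, scale in Q; simpl in Q. unfold qf in Qx. nra. }
     use_cross C P iso x y (L_zneg x (U0 x Cx) Qx) (L_zpos y (U0 y Cy) Q).
   + left. intros y Cy. destruct (classic (y = origin)) as [|Ny]; [auto|].
     right; left. split; [apply U0; auto|]. unfold Mgt. rewrite (U0 y Cy).
     destruct (Rlt_or_le (qf y) 0) as [Q|Q]; [unfold qf in Q; lra|].
     exfalso. destruct Q as [Q|Q].
     * apply Hno2; exists y; auto.
     * apply (Hq y Cy Ny); auto; apply U0; auto.
Qed.

Lemma Mset_sig x : Mset (sig x) <-> Mset x.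
Proof. unfold Mset, sig; simpl; split; intros; lra. Qed.

Lemma iso_sig (C D : pt -> Prop) : isolated_origin (fun x => D x /\ Mset x) ->
  (forall x, C x -> D (sig x)) -> isolated_origin (fun x => C x /\ Mset x).
Proof.
 intros [eps [He Hi]] HCD. exists eps; split; auto. intros x [Cx Mx] Sx.
 assert (sig x = origin).
 { apply Hi; [split; [auto| apply Mset_sig; auto]| rewrite sqnorm_sig; auto]. }
 rewrite <- (sig_sig x), H. apply sig_origin.
Qed.

Lemma swap23 (C : pt -> Prop) :
  (forall x, C (sig x) -> Tgt x \/ (Tset x /\ Mgt x) \/ x = origin) ->
  (forall x, C x -> Tlt x \/ (Tset x /\ Mlt x) \/ x = origin).
Proof.
 intros H y Cy. rewrite <- (sig_sig y) in Cy. destruct (H _ Cy) as [T|[[T M]|O]].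
 - left. unfold Tgt, Tlt, sig in *; simpl in *; lra.
 - right; left. unfold Tset, Mgt, Mlt, sig in *; simpl in *; split; lra.
 - right; right. rewrite <- (sig_sig y), O. apply sig_origin.
Qed.

Lemma swap32 (C : pt -> Prop) :
  (forall x, C (sig x) -> Tlt x \/ (Tset x /\ Mlt x) \/ x = origin) ->
  (forall x, C x -> Tgt x \/ (Tset x /\ Mgt x) \/ x = origin).
Proof.
 intros H y Cy. rewrite <- (sig_sig y) in Cy. destruct (H _ Cy) as [T|[[T M]|O]].
 - left. unfold Tgt, Tlt, sig in *; simpl in *; lra.
 - right; left. unfold Tset, Mgt, Mlt, sig in *; simpl in *; split; lra.
 - right; right. rewrite <- (sig_sig y), O. apply sig_origin.
Qed.

Lemma swap32' (C : pt -> Prop) :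
  (forall x, C x -> Tlt x \/ (Tset x /\ Mlt x) \/ x = origin) ->
  (forall x, C (sig x) -> Tgt x \/ (Tset x /\ Mgt x) \/ x = origin).
Proof.
 intros H. apply swap32. intros x Cx. rewrite sig_sig in Cx. auto.
Qed.

Lemma iso_line C v : is_line_dir C v -> transverse_to_T v ->
  isolated_origin (fun x => C x /\ Mset x).
Proof.
 intros [Nv Hl] Tv. unfold transverse_to_T in Tv.
 pose (a := u5 v). pose (q := qf v). pose (K := q*q + 1).
 assert (HK : 1 <= K) by (unfold K; pose proof (Rle_0_sqr q); unfold Rsqr in *; lra).
 assert (Ha : 0 < a * a) by (unfold a; pose proof (Rsqr_pos_lt _ Tv); unfold Rsqr in *; lra).
 exists (a * a / K). split; [apply Rdiv_lt_0_compat; lra|].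
 intros x [Cx Mx] Sx. apply Hl in Cx. destruct Cx as [t ->].
 destruct (Req_dec t 0) as [T0|T0].
 { subst t. apply pt_eq; unfold scale; simpl; ring. }
 exfalso.
 assert (E : a = t * q).
 { assert (F (scale t v) = 0) by (unfold F, qf, Mset in *; lra).
   rewrite F_scale in H. apply Rmult_integral in H. destruct H; [contradiction|].
   unfold a, q; lra. }
 rewrite sqnorm_scale in Sx.
 assert (SV : a * a <= sqnorm v).
 { unfold a, sqnorm, dot.
   pose proof (Rle_0_sqr (u1 v)); pose proof (Rle_0_sqr (u2 v)); pose proof (Rle_0_sqr (u3 v));
   pose proof (Rle_0_sqr (u4 v)); unfold Rsqr in *; lra. }
 assert (T2 : a * a <= t * t * K).
 { rewrite E. unfold K. pose proof (Rle_0_sqr t). unfold Rsqr in *.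
   replace (t * q * (t * q)) with (t*t*(q*q)) by ring.
   replace (t * t * (q * q + 1)) with (t*t*(q*q) + t*t) by ring. lra. }
 assert (A1 : t * t * (a * a) <= t * t * sqnorm v).
 { apply Rmult_le_compat_l; [apply Rle_0_sqr|auto]. }
 assert (A2 : a * a / K * (a * a / K) * (K * K) <= t * t * (a * a) * (K * K)).
 { replace (a * a / K * (a * a / K) * (K * K)) with ((a * a) * (a * a)) by (field; lra).
   replace (t * t * (a * a) * (K * K)) with ((t * t * K) * (a * a) * K) by ring.
   assert ((a*a)*(a*a) <= (t*t*K)*(a*a)) by (apply Rmult_le_compat_r; lra).
   assert ((t*t*K)*(a*a) <= (t*t*K)*(a*a)*K).
   { pose proof (Rle_0_sqr t). unfold Rsqr in *.
     assert (X : 0 <= t*t*K*(a*a)).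
     { apply Rmult_le_pos; [apply Rmult_le_pos|]; lra. }
     pose proof (Rmult_le_compat_l _ _ _ X HK). lra. }
   lra. }
 assert (A3 : a * a / K * (a * a / K) <= t * t * (a * a)).
 { apply (Rmult_le_reg_r (K * K)); [nra|auto]. }
 lra.
Qed.

Theorem lemma8 (C : pt -> Prop) (hC : is_cone C) :
  isolated_origin (fun x => C x /\ Mset x) <->
  ((exists v, is_line_dir C v /\ transverse_to_T v) \/
   (forall x, C x -> Tgt x \/ (Tset x /\ Mgt x) \/ x = origin) \/
   (forall x, C x -> Tlt x \/ (Tset x /\ Mlt x) \/ x = origin)).
Proof.
 pose proof (cone_props C hC) as P.
 pose proof (sig_props C P) as Ps.
 split.
 - intros iso.
   assert (isoS : isolated_origin (fun x => C (sig x) /\ Mset x)).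
   { apply (iso_sig _ C iso). intros x Cx. exact Cx. }
   destruct (classic (exists x, C x /\ u5 x < 0)) as [[x [Cx Ux]]|Hn].
   + destruct (classic (exists z, C z /\ 0 < u5 z)) as [[z [Cz Uz]]|Hp].
     * left. apply (caseA C P iso x z); auto.
     * right. destruct (caseB _ Ps isoS) as [H|H].
       { intros y Cy. destruct (Rle_or_lt 0 (u5 y)) as [|Hy]; auto.
         exfalso; apply Hp. exists (sig y). split; auto. unfold sig in *; simpl in *; lra. }
       { right. apply swap23; auto. }
       { left. apply swap32; auto. }
   + right. apply caseB; auto.
     intros y Cy. destruct (Rle_or_lt 0 (u5 y)) as [|Hy]; auto.
     exfalso; apply Hn; exists y; auto.
 - intros [[v [Hv Tv]]|[H|H]].
   + apply (iso_line C v Hv Tv).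
   + apply iso_ii; auto.
   + apply (iso_sig _ (fun x => C (sig x))).
     * apply iso_ii; auto. apply swap32'; auto.
     * intros x Cx. rewrite sig_sig; auto.
Qed.
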